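(* Let $R$ be a tolerance relation on $\{1,\ldots,n\}$ and $A=A(R)$. For $x\in M_n(\mathbb{C})$ let $\varphi_x:M_n(\mathbb{C})\to\mathbb{C}$, $\varphi_x(a):=\mathrm{Tr}(x^*a)$. Then the map $(A,\succeq)\to(A^*,\geq)$ sending $x\in A$ to $\varphi_x|_A$ is an isomorphism of ordered vector spaces (i.e. an isomorphism of the underlying real vector spaces such that $x\succeq 0$ if and only if $\varphi_x|_A\ge 0$).
   Context: A tolerance relation on a set $X$ is a reflexive and symmetric relation. $T:M_n(\mathbb{C})\to M_n(\mathbb{C})$ is $T(b)=\sum_{(i,j)\in R}E_{ii}bE_{jj}$ (setting entries in positions $(i,j)\notin R$ to zero) and $A(R)=T(M_n(\mathbb{C}))$, the matrices vanishing outside $R$. For $a\in A(R)$, $a\succeq 0$ means $a=T(b)$ for some positive semidefinite $b\in M_n(\mathbb{C})$. $A^*$ is the dual space of $A$, ordered by: $\varphi\ge0$ iff $\varphi(a)\ge 0$ for every positive semidefinite matrix $a\in A$. *)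

(* Defs.v *)
From HB Require Import structures.
From mathcomp Require Import all_boot all_order all_algebra.
From mathcomp Require Import complex.
From mathcomp Require Import reals.
Set Implicit Arguments. Unset Strict Implicit. Unset Printing Implicit Defensive.
Import Order.TTheory GRing.Theory Num.Theory.
Local Open Scope ring_scope.

Section Defs.
Variable (R : realType) (n : nat).
Local Notation C := (R[i]).

Definition adjmx m p (x : 'M[C]_(m, p)) : 'M[C]_(p, m) := (map_mx Num.conj x)^T.

Definition psd (b : 'M[C]_n) : Prop :=
  adjmx b = b /\ forall v : 'cV[C]_n, 0 <= (adjmx v *m b *m v) 0 0.

Definition tolerance (Rel : rel 'I_n) : Prop := reflexive Rel /\ symmetric Rel.

(* T(b) = sum_{(i,j) in R} E_ii b E_jj *)
Definition Tmap (Rel : rel 'I_n) (b : 'M[C]_n) : 'M[C]_n :=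
  \matrix_(i, j) (if Rel i j then b i j else 0).

(* membership in A(R) = T(M_n(C)): matrices vanishing outside R *)
Definition inA (Rel : rel 'I_n) (a : 'M[C]_n) : Prop :=
  forall i j, ~~ Rel i j -> a i j = 0.

Definition succeq0 (Rel : rel 'I_n) (a : 'M[C]_n) : Prop :=
  exists2 b, psd b & a = Tmap Rel b.

Definition phi (x : 'M[C]_n) (a : 'M[C]_n) : C := \tr (adjmx x *m a).

(* psi (defined on M_n, considered on A) is an element of A^*, i.e. its
   restriction to A is C-linear *)
Definition dual_lin (Rel : rel 'I_n) (psi : 'M[C]_n -> C) : Prop :=
  forall (c : C) a b, inA Rel a -> inA Rel b ->
    psi (c *: a + b) = c * psi a + psi b.

Definition dual_ge0 (Rel : rel 'I_n) (psi : 'M[C]_n -> C) : Prop :=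
  forall a, inA Rel a -> psd a -> 0 <= psi a.

End Defs.

(* Main.v *)
Require Import Defs.
From HB Require Import structures.
From mathcomp Require Import all_boot all_order all_algebra.
From mathcomp Require Import complex.
From mathcomp Require Import reals.
From mathcomp Require Import ring lra.
From mathcomp Require Import all_classical topology normedtype matrix_normedtype derive.
Import Order.TTheory GRing.Theory Num.Theory.
Import numFieldTopology.Exports numFieldNormedType.Exports.
Local Open Scope classical_set_scope.
Local Open Scope ring_scope.
Set Implicit Arguments. Unset Strict Implicit. Unset Printing Implicit Defensive.

Notation RE := (@complex.Re _).
Notation IM := (@complex.Im _).


Section Alg.
Variable (R : realType) (n : nat).
Local Notation C := (R[i]).

Lemma conjE (z : C) : Num.conj z = (RE z -i* IM z)%C.
Proof. by case: z. Qed.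
Lemma RED (x y : C) : RE (x + y) = RE x + RE y. Proof. by case: x; case: y. Qed.
Lemma IMD (x y : C) : IM (x + y) = IM x + IM y. Proof. by case: x; case: y. Qed.
Lemma REM (x y : C) : RE (x * y) = RE x * RE y - IM x * IM y. Proof. by case: x; case: y. Qed.
Lemma IMM (x y : C) : IM (x * y) = RE x * IM y + IM x * RE y. Proof. by case: x => a b; case: y => c d /=. Qed.
Lemma REJ (x : C) : RE (Num.conj x) = RE x. Proof. by case: x. Qed.
Lemma IMJ (x : C) : IM (Num.conj x) = - IM x. Proof. by case: x. Qed.
Lemma RE0 : RE (0 : C) = 0. Proof. by []. Qed.
Lemma IM0 : IM (0 : C) = 0. Proof. by []. Qed.
Lemma REr (t : R) : RE (t%:C)%C = t. Proof. by []. Qed.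
Lemma IMr (t : R) : IM (t%:C)%C = 0. Proof. by []. Qed.
Lemma RErM (t : R) (z : C) : RE ((t%:C)%C * z) = t * RE z.
Proof. by rewrite REM REr IMr mul0r subr0. Qed.
Lemma conjr (t : R) : Num.conj ((t%:C)%C : C) = (t%:C)%C.
Proof. by rewrite conjE /= oppr0. Qed.
Lemma ge0C (z : C) : (0 <= z) = (IM z == 0) && (0 <= RE z).
Proof. by case: z => a b; rewrite lecE /= eq_sym. Qed.
Lemma complex_ext (x y : C) : RE x = RE y -> IM x = IM y -> x = y.
Proof. by case: x; case: y => /= ? ? ? ? -> ->. Qed.

Lemma RE_sum (I : Type) (s : seq I) (P : pred I) (F : I -> C) :
  RE (\sum_(i <- s | P i) F i) = \sum_(i <- s | P i) RE (F i).
Proof. by elim/big_rec2: _ => // i y1 y2 _ <-; rewrite RED. Qed.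
Lemma IM_sum (I : Type) (s : seq I) (P : pred I) (F : I -> C) :
  IM (\sum_(i <- s | P i) F i) = \sum_(i <- s | P i) IM (F i).
Proof. by elim/big_rec2: _ => // i y1 y2 _ <-; rewrite IMD. Qed.

Lemma adjmxE m p (x : 'M[C]_(m, p)) i j : adjmx x i j = Num.conj (x j i).
Proof. by rewrite /adjmx !mxE. Qed.
Lemma adjmxK m p (x : 'M[C]_(m, p)) : adjmx (adjmx x) = x.
Proof. by apply/matrixP => i j; rewrite !adjmxE conjCK. Qed.
Lemma adjmxD m p (x y : 'M[C]_(m, p)) : adjmx (x + y) = adjmx x + adjmx y.
Proof. by apply/matrixP => i j; rewrite [RHS]mxE !adjmxE mxE rmorphD. Qed.
Lemma adjmxN m p (x : 'M[C]_(m, p)) : adjmx (- x) = - adjmx x.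
Proof. by apply/matrixP => i j; rewrite [RHS]mxE !adjmxE mxE rmorphN. Qed.
Lemma adjmxB m p (x y : 'M[C]_(m, p)) : adjmx (x - y) = adjmx x - adjmx y.
Proof. by rewrite adjmxD adjmxN. Qed.
Lemma adjmxZ m p c (x : 'M[C]_(m, p)) : adjmx (c *: x) = Num.conj c *: adjmx x.
Proof. by apply/matrixP => i j; rewrite [RHS]mxE !adjmxE mxE rmorphM. Qed.
Lemma adjmx0 m p : adjmx (0 : 'M[C]_(m, p)) = 0.
Proof. by apply/matrixP => i j; rewrite [RHS]mxE adjmxE mxE rmorph0. Qed.
Lemma adjmxM m p r (x : 'M[C]_(m, p)) (y : 'M[C]_(p, r)) :
  adjmx (x *m y) = adjmx y *m adjmx x.
Proof.
apply/matrixP => i j; rewrite adjmxE !mxE rmorph_sum; apply: eq_bigr => k _.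
by rewrite rmorphM !adjmxE mulrC.
Qed.
Lemma tr_adj (x : 'M[C]_n) : \tr (adjmx x) = Num.conj (\tr x).
Proof. by rewrite /mxtrace rmorph_sum; apply: eq_bigr => i _; rewrite adjmxE. Qed.

Lemma phiE (x a : 'M[C]_n) :
  phi x a = \sum_i \sum_j Num.conj (x i j) * a i j.
Proof.
rewrite /phi /mxtrace exchange_big; apply: eq_bigr => j _.
by rewrite mxE; apply: eq_bigr => i _; rewrite adjmxE.
Qed.
Lemma phi_sym (x a : 'M[C]_n) : phi a x = Num.conj (phi x a).
Proof. by rewrite /phi -tr_adj adjmxM adjmxK. Qed.
Lemma phiDr (x a b : 'M[C]_n) : phi x (a + b) = phi x a + phi x b.
Proof. by rewrite /phi mulmxDr mxtraceD. Qed.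
Lemma phiZr (x a : 'M[C]_n) c : phi x (c *: a) = c * phi x a.
Proof. by rewrite /phi -scalemxAr mxtraceZ. Qed.
Lemma phiDl (x y a : 'M[C]_n) : phi (x + y) a = phi x a + phi y a.
Proof. by rewrite /phi adjmxD mulmxDl mxtraceD. Qed.
Lemma phiZl (x a : 'M[C]_n) c : phi (c *: x) a = Num.conj c * phi x a.
Proof. by rewrite /phi adjmxZ -scalemxAl mxtraceZ. Qed.
Lemma phiNl (x a : 'M[C]_n) : phi (- x) a = - phi x a.
Proof. by rewrite -scaleN1r phiZl rmorphN rmorph1 mulN1r. Qed.
Lemma phiBl (x y a : 'M[C]_n) : phi (x - y) a = phi x a - phi y a.
Proof. by rewrite phiDl phiNl. Qed.
Lemma phiNr (x a : 'M[C]_n) : phi x (- a) = - phi x a.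
Proof. by rewrite -scaleN1r phiZr mulN1r. Qed.
Lemma phiBr (x a b : 'M[C]_n) : phi x (a - b) = phi x a - phi x b.
Proof. by rewrite phiDr phiNr. Qed.

Definition qf (b : 'M[C]_n) (v : 'cV[C]_n) : C := (adjmx v *m b *m v) 0 0.
Definition qf2 (b : 'M[C]_n) (u v : 'cV[C]_n) : C := (adjmx u *m b *m v) 0 0.
Definition ev (k : 'I_n) : 'cV[C]_n := delta_mx k 0.
Definition r1 (w : 'cV[C]_n) : 'M[C]_n := w *m adjmx w.

Lemma mx11E (x y : 'M[C]_1) : (x *m y) 0 0 = x 0 0 * y 0 0.
Proof. by rewrite mxE big_ord1. Qed.

Lemma phi_r1 (x : 'M[C]_n) w : phi x (r1 w) = Num.conj (qf x w).
Proof.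
rewrite /phi /r1 /qf mulmxA mxtrace_mulC /mxtrace big_ord1.
by rewrite -adjmxE !adjmxM adjmxK mulmxA.
Qed.

Lemma qf2E b k l : qf2 b (ev k) (ev l) = b k l.
Proof.
rewrite /qf2; have -> : adjmx (ev k) = delta_mx 0 k.
  by apply/matrixP => i j; rewrite adjmxE !mxE rmorph_nat andbC.
by rewrite -rowE -colE !mxE.
Qed.
Lemma qfE b k : qf b (ev k) = b k k.
Proof. exact: qf2E. Qed.

Lemma e00D (A B : 'M[C]_1) : (A + B) 0 0 = A 0 0 + B 0 0. Proof. exact: mxE. Qed.
Lemma e00Z c (A : 'M[C]_1) : (c *: A) 0 0 = c * A 0 0. Proof. exact: mxE. Qed.

Lemma qf_expand b u v (al : C) :
  qf b (u + al *: v) =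
  qf b u + al * qf2 b u v + Num.conj al * qf2 b v u + Num.conj al * al * qf b v.
Proof.
rewrite /qf /qf2 adjmxD adjmxZ !mulmxDl !mulmxDr -!scalemxAl -!scalemxAr -?scalemxAl.
rewrite !e00D !e00Z; ring.
Qed.

Lemma qfD b1 b2 v : qf (b1 + b2) v = qf b1 v + qf b2 v.
Proof. by rewrite /qf mulmxDr mulmxDl e00D. Qed.
Lemma qfZ c b v : qf (c *: b) v = c * qf b v.
Proof. by rewrite /qf -scalemxAr -scalemxAl e00Z. Qed.
Lemma qf_conj b v : Num.conj (qf b v) = qf (adjmx b) v.
Proof. by rewrite /qf -adjmxE !adjmxM adjmxK mulmxA. Qed.

Lemma psd_r1 w : psd (r1 w).
Proof.
split; first by rewrite /r1 adjmxM adjmxK.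
move=> v; rewrite /r1 mulmxA -(mulmxA (adjmx v *m w)) mx11E.
have -> : (adjmx w *m v) 0 0 = Num.conj ((adjmx v *m w) 0 0).
  by rewrite -adjmxE adjmxM adjmxK.
exact: mul_conjC_ge0.
Qed.

Lemma psdD (b1 b2 : 'M[C]_n) : psd b1 -> psd b2 -> psd (b1 + b2).
Proof.
move=> [h1 p1] [h2 p2]; split; first by rewrite adjmxD h1 h2.
by move=> v; change (0 <= qf (b1 + b2) v); rewrite qfD addr_ge0 //; [exact: p1|exact: p2].
Qed.
Lemma psdZ (t : R) (b : 'M[C]_n) : 0 <= t -> psd b -> psd ((t%:C)%C *: b).
Proof.
move=> t0 [h p]; split; first by rewrite adjmxZ conjr h.
by move=> v; change (0 <= qf ((t%:C)%C *: b) v); rewrite qfZ mulr_ge0 // ?lecR //; exact: p.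
Qed.
Lemma psd0 : psd (0 : 'M[C]_n).
Proof. by split; [rewrite adjmx0 | move=> v; rewrite /qf mulmx0 mul0mx mxE]. Qed.

Definition nrm (m : 'M[C]_n) : R := RE (phi m m).
Lemma nrmE (m : 'M[C]_n) : nrm m = \sum_i \sum_j (RE (m i j) ^+ 2 + IM (m i j) ^+ 2).
Proof.
rewrite /nrm phiE RE_sum; apply: eq_bigr => i _; rewrite RE_sum.
by apply: eq_bigr => j _; rewrite REM REJ IMJ; ring.
Qed.
Lemma nrm_ge0 (m : 'M[C]_n) : 0 <= nrm m.
Proof. by rewrite nrmE; do 2!(apply: sumr_ge0 => ? _); rewrite addr_ge0 // sqr_ge0. Qed.
Lemma nrm_eq0 (m : 'M[C]_n) : nrm m <= 0 -> m = 0.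
Proof.
move=> h; have h0 : nrm m = 0 by apply/eqP; rewrite eq_le h nrm_ge0.
move: h0; rewrite nrmE => /eqP; rewrite psumr_eq0 => [/allP H|i _]; last first.
  by apply: sumr_ge0 => ? _; rewrite addr_ge0 // sqr_ge0.
apply/matrixP => i j; move/(_ i (mem_index_enum _)): H; rewrite implyTb.
rewrite psumr_eq0 => [/allP/(_ j (mem_index_enum _))|k _]; last by rewrite addr_ge0 // sqr_ge0.
rewrite implyTb paddr_eq0 ?sqr_ge0 // !sqrf_eq0 => /andP[/eqP a /eqP b].
by rewrite mxE; apply: complex_ext.
Qed.
Lemma term_le_sum (I : finType) (F : I -> R) k : (forall i, 0 <= F i) -> F k <= \sum_i F i.
Proof. by move=> h; rewrite (bigD1 k) //= lerDl sumr_ge0. Qed.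
Lemma nrm_entry (m : 'M[C]_n) k l : RE (m k l) ^+ 2 <= nrm m.
Proof.
rewrite nrmE.
have h1 := @term_le_sum _ (fun i => \sum_j (RE (m i j) ^+ 2 + IM (m i j) ^+ 2)) k.
have h2 := @term_le_sum _ (fun j => (RE (m k j) ^+ 2 + IM (m k j) ^+ 2)) l.
apply: le_trans (h1 _); last first.
  by move=> i; apply: sumr_ge0 => ? _; rewrite addr_ge0 // sqr_ge0.
apply: le_trans (h2 _); last by move=> j; rewrite addr_ge0 // sqr_ge0.
by rewrite lerDl sqr_ge0.
Qed.

Lemma nrm_quad (d K : 'M[C]_n) (t : R) :
  nrm (d + (t%:C)%C *: K) = nrm d + t * RE (phi d K + phi K d) + t ^+ 2 * nrm K.
Proof.
rewrite /nrm !phiDl !phiDr !phiZl !phiZr conjr !RED.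
rewrite !REM !IMM /=; ring.
Qed.

Lemma quad_ge0 (al be : R) :
  (forall t, 0 < t -> t < 1 -> 0 <= t * al + t ^+ 2 * be) -> 0 <= al.
Proof.
move=> h; rewrite leNgt; apply/negP => al0.
pose D := `|be| + 1 - al.
have D0 : 0 < D by rewrite /D; have := normr_ge0 be; lra.
pose t := - al / D.
have tD : t * D = - al by rewrite /t mulrVK // unitfE gt_eqF.
have t0 : 0 < t by rewrite /t divr_gt0 // oppr_gt0.
have t1 : t < 1 by rewrite /t ltr_pdivrMr // mul1r /D; have := normr_ge0 be; lra.
have := h t t0 t1.
have bb : be <= `|be| := ler_norm be.
have nb := normr_ge0 be.
rewrite /D in tD.
nra.
Qed.

End Alg.

Section Extra.
Variable (R : realType) (n : nat).
Local Notation C := (R[i]).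
Lemma qf_sum (b : 'M[C]_n) v :
  qf b v = \sum_i \sum_j Num.conj (v i 0) * b i j * v j 0.
Proof.
rewrite /qf mxE exchange_big; apply: eq_bigr => j _; rewrite mxE big_distrl.
by apply: eq_bigr => i _; rewrite adjmxE.
Qed.
End Extra.

Section RelAlg.
Variable (R : realType) (n : nat) (Rel : rel 'I_n).
Hypothesis reflR : reflexive Rel.
Hypothesis symR : symmetric Rel.
Local Notation C := (R[i]).
Local Notation T := (Tmap Rel).

Lemma TmapE (b : 'M[C]_n) i j : T b i j = if Rel i j then b i j else 0.
Proof. by rewrite mxE. Qed.
Lemma inA_T (b : 'M[C]_n) : inA Rel (T b).
Proof. by move=> i j /negbTE h; rewrite TmapE h. Qed.
Lemma inA0 : inA Rel (0 : 'M[C]_n).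
Proof. by move=> i j _; rewrite mxE. Qed.
Lemma inAD (a b : 'M[C]_n) : inA Rel a -> inA Rel b -> inA Rel (a + b).
Proof. by move=> ha hb i j h; rewrite mxE ha // hb // addr0. Qed.
Lemma inAZ c (a : 'M[C]_n) : inA Rel a -> inA Rel (c *: a).
Proof. by move=> ha i j h; rewrite mxE ha // mulr0. Qed.
Lemma inAN (a : 'M[C]_n) : inA Rel a -> inA Rel (- a).
Proof. by move=> ha i j h; rewrite mxE ha // oppr0. Qed.
Lemma inAB (a b : 'M[C]_n) : inA Rel a -> inA Rel b -> inA Rel (a - b).
Proof. by move=> ha hb; apply: inAD => //; apply: inAN. Qed.
Lemma T_D (a b : 'M[C]_n) : T (a + b) = T a + T b.
Proof. by apply/matrixP => i j; rewrite !mxE; case: (Rel i j); rewrite ?addr0. Qed.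
Lemma T_Z c (a : 'M[C]_n) : T (c *: a) = c *: T a.
Proof. by apply/matrixP => i j; rewrite !mxE; case: (Rel i j); rewrite ?mulr0. Qed.
Lemma T0 : T (0 : 'M[C]_n) = 0.
Proof. by apply/matrixP => i j; rewrite !mxE; case: (Rel i j). Qed.
Lemma T_id (a : 'M[C]_n) : inA Rel a -> T a = a.
Proof.
move=> ha; apply/matrixP => i j; rewrite TmapE.
by case: ifP => // /negbT /ha ->.
Qed.

Lemma phi_T (b a : 'M[C]_n) : inA Rel a -> phi (T b) a = phi b a.
Proof.
move=> ha; rewrite !phiE; apply: eq_bigr => i _; apply: eq_bigr => j _.
rewrite TmapE; case: ifP => // /negbT /ha ->; by rewrite !mulr0.
Qed.
Lemma phi_Tr (b a : 'M[C]_n) : inA Rel a -> phi a (T b) = phi a b.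
Proof. by move=> ha; rewrite phi_sym phi_T // -phi_sym. Qed.

Lemma adj_T (b : 'M[C]_n) : adjmx (T b) = T (adjmx b).
Proof.
apply/matrixP => i j; rewrite adjmxE !TmapE symR adjmxE.
by case: (Rel i j); rewrite ?rmorph0.
Qed.

Lemma evE k i : (@ev R n k) i 0 = (i == k)%:R.
Proof. by rewrite mxE andbT. Qed.

Lemma inA_r1 k l (al : C) : Rel k l -> inA Rel (r1 ((@ev R n k) + al *: (@ev R n l))).
Proof.
move=> hkl i j hij; rewrite /r1 mxE big_ord1 adjmxE !mxE !andbT.
have Hk : Rel k k := reflR k.
have Hl : Rel l l := reflR l.
have Hlk : Rel l k by rewrite symR.
case: (eqVneq i k) => [eik|nik]; case: (eqVneq i l) => [eil|nil];
case: (eqVneq j k) => [ejk|njk]; case: (eqVneq j l) => [ejl|njl];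
  subst => //=; rewrite ?hkl ?Hk ?Hl ?Hlk in hij => //;
  by rewrite ?(mulr0, mul0r, addr0, add0r, rmorph0, mulr0).
Qed.

Lemma qf_pair (b : 'M[C]_n) k l (al : C) :
  qf b ((@ev R n k) + al *: (@ev R n l)) =
  b k k + al * b k l + Num.conj al * b l k + Num.conj al * al * b l l.
Proof. by rewrite qf_expand !qf2E !qfE. Qed.

Lemma herm_lemma (p q r s : C) :
  0 <= p -> 0 <= s -> 0 <= p + 1 * q + Num.conj 1 * r + Num.conj 1 * 1 * s ->
  0 <= p + 'i%C * q + Num.conj 'i%C * r + Num.conj 'i%C * 'i%C * s ->
  Num.conj r = q.
Proof.
case: p => p1 p2; case: q => q1 q2; case: r => r1 r2; case: s => s1 s2.
rewrite !ge0C /= => /andP[/eqP h1 _] /andP[/eqP h2 _] /andP[/eqP h3 _] /andP[/eqP h4 _].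
apply: complex_ext => /=; lra.
Qed.

Lemma herm_of_dual (x : 'M[C]_n) : inA Rel x ->
  (forall a, inA Rel a -> psd a -> 0 <= phi x a) -> adjmx x = x.
Proof.
move=> hx H.
have Q : forall k l al, Rel k l ->
    0 <= x k k + al * x k l + Num.conj al * x l k + Num.conj al * al * x l l.
  move=> k l al hkl; rewrite -qf_pair -conjC_ge0 -phi_r1.
  by apply: H; [apply: inA_r1 | apply: psd_r1].
apply/matrixP => k l; rewrite adjmxE.
have [hkl|nkl] := boolP (Rel k l); last first.
  by rewrite (hx l k) ?rmorph0 ?hx // symR.
have Qk := Q k k 0 (reflR k); have Ql := Q l l 0 (reflR l).
rewrite ?rmorph0 !mul0r !addr0 in Qk Ql.
apply: herm_lemma (Qk) (Ql) (Q _ _ _ hkl) (Q _ _ _ hkl).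
Qed.

Lemma RE1 : RE (1 : C) = 1. Proof. by []. Qed.
Lemma IM1 : IM (1 : C) = 0. Proof. by []. Qed.
Lemma REN (z : C) : RE (- z) = - RE z. Proof. by case: z. Qed.
Lemma IMN (z : C) : IM (- z) = - IM z. Proof. by case: z. Qed.

Lemma bound_gen (p s u : C) (al : C) :
  0 <= p + al * u + Num.conj al * Num.conj u + Num.conj al * al * s ->
  0 <= RE p + 2 * (RE al * RE u - IM al * IM u) + (RE al ^+ 2 + IM al ^+ 2) * RE s - 
       (RE al * IM al - IM al * RE al) * IM s.
Proof.
case: p => p1 p2; case: u => u1 u2; case: s => s1 s2; case: al => a1 a2.
rewrite ge0C => /andP[_ h]; move: h => /=; nra.
Qed.

Lemma psd_bounds (b : 'M[C]_n) k l : psd b ->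
  [/\ 0 <= RE (b k k), `|RE (b k l)| <= (RE (b k k) + RE (b l l)) / 2
    & `|IM (b k l)| <= (RE (b k k) + RE (b l l)) / 2].
Proof.
move=> [hb pb].
have bl : b l k = Num.conj (b k l) by rewrite -{1}hb adjmxE.
have P (al : C) := pb ((@ev R n k) + al *: (@ev R n l)).
have B al := @bound_gen (b k k) (b l l) (b k l) al.
have B' (al : C) : 0 <= RE (b k k) + 2 * (RE al * RE (b k l) - IM al * IM (b k l)) +
    (RE al ^+ 2 + IM al ^+ 2) * RE (b l l) - (RE al * IM al - IM al * RE al) * IM (b l l).
  by apply: B; rewrite -bl -qf_pair; exact: P.
have B1 := B' 1; have B2 := B' (-1); have B3 := B' 'i%C; have B4 := B' (-'i%C).
rewrite ?REN ?IMN ?RE1 ?IM1 /= in B1 B2 B3 B4.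
have := pb (@ev R n k); rewrite -/(qf b _) qfE ge0C => /andP[_ bk].
split => //; rewrite ler_norml; apply/andP; split; nra.
Qed.

End RelAlg.

Section Topo.
Variable (R : realType) (n : nat).
Local Notation C := (R[i]).
Local Notation N := (n * n + n * n)%N.

Definition mk (w : 'rV[R]_N) : 'M[C]_n :=
  \matrix_(i, j) ((w ord0 (lshift (n * n) (mxvec_index i j))) +i*
                  (w ord0 (rshift (n * n) (mxvec_index i j))))%C.
Definition un (b : 'M[C]_n) : 'rV[R]_N :=
  row_mx (mxvec (map_mx (@complex.Re R) b)) (mxvec (map_mx (@complex.Im R) b)).

Lemma mkK b : mk (un b) = b.
Proof.
apply/matrixP => i j; rewrite mxE row_mxEl row_mxEr !mxvecE !mxE.
by case: (b i j).
Qed.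
Lemma mk0 : mk 0 = 0.
Proof. by apply/matrixP => i j; apply: complex_ext; rewrite !mxE. Qed.

Lemma cont_add (f g : 'rV[R]_N -> R) : continuous f -> continuous g -> continuous (fun w => f w + g w).
Proof. by move=> cf cg w; apply: continuousD; [exact: cf | exact: cg]. Qed.
Lemma cont_mul (f g : 'rV[R]_N -> R) : continuous f -> continuous g -> continuous (fun w => f w * g w).
Proof. by move=> cf cg w; apply: continuousM; [exact: cf | exact: cg]. Qed.
Lemma cont_opp (f : 'rV[R]_N -> R) : continuous f -> continuous (fun w => - f w).
Proof. by move=> cf w; apply: continuousN; exact: cf. Qed.

Definition cC (F : 'rV[R]_N -> C) :=
  continuous (fun w : 'rV[R]_N => RE (F w)) /\ continuous (fun w : 'rV[R]_N => IM (F w)).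

Lemma cC_mk i j : cC (fun w => mk w i j).
Proof.
split.
  rewrite (_ : (fun w => _) = (fun w : 'rV[R]_N => w ord0 (lshift (n * n) (mxvec_index i j)))).
    exact: coord_continuous.
  by apply/funext => w; rewrite mxE.
rewrite (_ : (fun w => _) = (fun w : 'rV[R]_N => w ord0 (rshift (n * n) (mxvec_index i j)))).
  exact: coord_continuous.
by apply/funext => w; rewrite mxE.
Qed.
Lemma cC_cst c : cC (fun=> c).
Proof. by split; apply: cst_continuous. Qed.
Lemma cC_add F G : cC F -> cC G -> cC (fun w => F w + G w).
Proof.
move=> [f1 f2] [g1 g2]; split.
  rewrite (_ : (fun w => _) = (fun w => RE (F w) + RE (G w))); last by apply/funext => w; rewrite RED.
  by move=> w; apply: continuousD; [exact: f1 | exact: g1].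
rewrite (_ : (fun w => _) = (fun w => IM (F w) + IM (G w))); last by apply/funext => w; rewrite IMD.
by move=> w; apply: continuousD; [exact: f2 | exact: g2].
Qed.
Lemma cC_mul F G : cC F -> cC G -> cC (fun w => F w * G w).
Proof.
move=> [f1 f2] [g1 g2]; split.
  rewrite (_ : (fun w => _) = (fun w => RE (F w) * RE (G w) - IM (F w) * IM (G w))); last by apply/funext => w; rewrite REM.
  by apply: cont_add; [apply: cont_mul | apply: cont_opp; apply: cont_mul].
rewrite (_ : (fun w => _) = (fun w => RE (F w) * IM (G w) + IM (F w) * RE (G w))); last by apply/funext => w; rewrite IMM.
by apply: cont_add; apply: cont_mul.
Qed.
Lemma cC_conj F : cC F -> cC (fun w => Num.conj (F w)).
Proof.
move=> [f1 f2]; split.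
  rewrite (_ : (fun w => _) = (fun w => RE (F w))) //; last by apply/funext => w; rewrite REJ.
rewrite (_ : (fun w => _) = (fun w => - IM (F w))); last by apply/funext => w; rewrite IMJ.
exact: cont_opp.
Qed.
Lemma cC_opp F : cC F -> cC (fun w => - F w).
Proof.
move=> h; rewrite (_ : (fun w => _) = (fun w => (-1) * F w)); last by apply/funext => w; rewrite mulN1r.
by apply: cC_mul => //; apply: cC_cst.
Qed.
Lemma cC_sum (I : Type) (s : seq I) (F : I -> 'rV[R]_N -> C) :
  (forall i, cC (F i)) -> cC (fun w => \sum_(i <- s) F i w).
Proof.
move=> h; elim: s => [|a s IH].
  rewrite (_ : (fun w => _) = (fun=> 0)); first exact: cC_cst.
  by apply/funext => w; rewrite big_nil.
rewrite (_ : (fun w => _) = (fun w => F a w + \sum_(i <- s) F i w)).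
  exact: cC_add.
by apply/funext => w; rewrite big_cons.
Qed.

Lemma closed_eq0 (f : 'rV[R]_N -> R) : continuous f -> closed [set w | f w = 0].
Proof.
move=> cf; have := @preimage_closed _ _ f [set x : R | x = 0] (fun w _ => cf w) (@closed_eq _ 0).
by [].
Qed.
Lemma closed_ge0 (f : 'rV[R]_N -> R) : continuous f -> closed [set w | 0 <= f w].
Proof.
move=> cf; have := @preimage_closed _ _ f [set x : R | 0 <= x] (fun w _ => cf w) (@closed_ge _ 0).
by [].
Qed.

Lemma closed_psd : closed [set w | psd (mk w)].
Proof.
have -> : [set w | psd (mk w)] =
  (\bigcap_(p in [set: 'I_n * 'I_n]) [set w | RE (adjmx (mk w) p.1 p.2 - mk w p.1 p.2) = 0]) `&`
  (\bigcap_(p in [set: 'I_n * 'I_n]) [set w | IM (adjmx (mk w) p.1 p.2 - mk w p.1 p.2) = 0]) `&`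
  (\bigcap_(v in [set: 'cV[C]_n]) [set w | IM (qf (mk w) v) = 0]) `&`
  (\bigcap_(v in [set: 'cV[C]_n]) [set w | 0 <= RE (qf (mk w) v)]).
  apply/seteqP; split => w /=.
    move=> [h p]; split; [split; [split|]|] => q _ /=.
    - by rewrite h subrr.
    - by rewrite h subrr.
    - by have := p q; rewrite -/(qf _ _) ge0C => /andP[/eqP].
    - by have := p q; rewrite -/(qf _ _) ge0C => /andP[_].
  move=> [[[h1 h2] h3] h4]; split.
    apply/matrixP => i j; apply/eqP; rewrite -subr_eq0; apply/eqP.
    by apply: complex_ext; [exact: (h1 (i, j)) | exact: (h2 (i, j))].
  move=> v; change (0 <= qf (mk w) v); rewrite ge0C; apply/andP; split.
    by apply/eqP; exact: h3.
  exact: h4.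
have cA p : cC (fun w => adjmx (mk w) p.1 p.2 - mk w p.1 p.2).
  apply: cC_add; last by apply: cC_opp; apply: cC_mk.
  rewrite (_ : (fun w => _) = (fun w => Num.conj (mk w p.2 p.1))); last by apply/funext => w; rewrite adjmxE.
  by apply: cC_conj; apply: cC_mk.
have cQ v : cC (fun w => qf (mk w) v).
  rewrite (_ : (fun w => _) = (fun w => \sum_i \sum_j Num.conj (v i 0) * mk w i j * v j 0)); last first.
    by apply/funext => w; rewrite qf_sum.
  apply: cC_sum => i; apply: cC_sum => j; apply: cC_mul; last exact: cC_cst.
  by apply: cC_mul; [exact: cC_cst | exact: cC_mk].
repeat apply: closedI; apply: closed_bigI => p _.
- exact: closed_eq0 (cA p).1.
- exact: closed_eq0 (cA p).2.
- exact: closed_eq0 (cQ p).2.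
- exact: closed_ge0 (cQ p).1.
Qed.

End Topo.

Section Min.
Variable (R : realType) (n : nat) (Rel : rel 'I_n).
Hypothesis reflR : reflexive Rel.
Hypothesis symR : symmetric Rel.
Local Notation C := (R[i]).
Local Notation N := (n * n + n * n)%N.
Local Notation T := (Tmap Rel).
Variable x : 'M[C]_n.

Lemma diag_bound (b : 'M[C]_n) k : psd b -> nrm (T b - x) <= nrm x ->
  RE (b k k) <= 2 * (nrm x + 1).
Proof.
move=> pb hG.
have e := nrm_entry (T b - x) k k.
rewrite mxE TmapE reflR mxE RED REN in e.
have ex := nrm_entry x k k.
have [b0 _ _] := psd_bounds k k pb.
have g0 := nrm_ge0 x.
set u := RE (b k k) in e b0 *; set r := RE (x k k) in e ex *.
have h1 : (u - r) ^+ 2 <= nrm x by apply: le_trans hG.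
have s1 := sqr_ge0 (u - r - 1); have s2 := sqr_ge0 (r - 1); nra.
Qed.

Lemma entry_bound (b : 'M[C]_n) k l : psd b -> nrm (T b - x) <= nrm x ->
  `|RE (b k l)| <= 2 * (nrm x + 1) /\ `|IM (b k l)| <= 2 * (nrm x + 1).
Proof.
move=> pb hG; have [_ h1 h2] := psd_bounds k l pb.
have dk := diag_bound k pb hG; have dl := diag_bound l pb hG.
split; [apply: le_trans h1 _ | apply: le_trans h2 _]; lra.
Qed.

Lemma exists_min : exists2 b0 : 'M[C]_n, psd b0 &
  forall b, psd b -> nrm (T b0 - x) <= nrm (T b - x).
Proof.
pose M := 2 * (nrm x + 1).
have M0 : 0 <= M by rewrite /M; have := nrm_ge0 x; lra.
pose Box := [set w : 'rV[R]_N | forall i, `[- M, M]%classic (w ord0 i)].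
pose D := Box `&` [set w | psd (mk w)].
pose f := fun w : 'rV[R]_N => nrm (T (mk w) - x).
have cf : continuous f.
  have cm : cC (fun w : 'rV[R]_N => phi (T (mk w) - x) (T (mk w) - x)).
    rewrite (_ : (fun w => _) = (fun w => \sum_i \sum_j Num.conj ((T (mk w) - x) i j) * (T (mk w) - x) i j)); last first.
      by apply/funext => w; rewrite phiE.
    have ce i j : cC (fun w : 'rV[R]_N => (T (mk w) - x) i j).
      rewrite (_ : (fun w => _) = (fun w => (if Rel i j then mk w i j else 0) + - x i j)); last first.
        by apply/funext => w; rewrite !mxE.
      apply: cC_add; last exact: cC_cst.
      by case: (Rel i j); [exact: cC_mk | exact: cC_cst].
    apply: cC_sum => i; apply: cC_sum => j; apply: cC_mul => //; exact: cC_conj.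
  exact: cm.1.
have cD : compact D.
  apply: compact_closedI; last exact: closed_psd.
  by apply: (@rV_compact _ _ (fun=> `[- M, M]%classic)) => i; exact: segment_compact.
have D0 : D !=set0.
  exists 0; split; last by rewrite /= mk0; exact: psd0.
  by move=> i /=; rewrite mxE in_itv /= oppr_le0 M0.
have [c cD' cmin] := EVT_min_rV D0 cD (continuous_subspaceT cf).
move: cD'; rewrite inE => -[_ pc].
exists (mk c) => // b pb.
have f0 : f c <= f 0 by apply: cmin; rewrite inE; split; [move=> i /=; rewrite mxE in_itv /= oppr_le0 M0 | rewrite /= mk0; exact: psd0].
have e0 : f 0 = nrm x.
  by rewrite /f mk0 T0 sub0r /nrm phiNl phiNr opprK.
case: (leP (nrm (T b - x)) (nrm x)) => hb; last first.
  by apply: le_trans (ltW hb); rewrite -e0.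
have := cmin (un b); rewrite /f mkK; apply; rewrite inE; split; last by rewrite /= mkK.
move=> i /=; rewrite -(splitK i); case: (fintype.split i) => k /=.
  rewrite row_mxEl; case/mxvec_indexP: k => k l; rewrite mxvecE mxE in_itv /=.
  by have [h _] := entry_bound k l pb hb; rewrite ler_norml in h.
rewrite row_mxEr; case/mxvec_indexP: k => k l; rewrite mxvecE mxE in_itv /=.
by have [_ h] := entry_bound k l pb hb; rewrite ler_norml in h.
Qed.

End Min.

Section Spec.
Variable (R : realType) (n : nat).
Local Notation C := (R[i]).

Lemma adj_tC m p (A : 'M[C]_(m, p)) : adjmx A = map_mx Num.conj (A ^T).
Proof. by rewrite /adjmx map_trmx. Qed.

Lemma diag_entry_qf (P b : 'M[C]_n) k :
  (P *m b *m adjmx P) k k = qf b (adjmx (row k P)).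
Proof.
rewrite /qf adjmxK.
transitivity ((row k (P *m b *m adjmx P)) 0 k); first by rewrite !mxE.
rewrite !row_mul [LHS]mxE [RHS]mxE; apply: eq_bigr => l _; congr (_ * _).
by rewrite (@adjmxE R n n P) (@adjmxE R 1 n (row k P)) mxE.
Qed.

Lemma trace_psd (a b : 'M[C]_n) : psd a -> psd b -> 0 <= phi b a.
Proof.
move=> [ha pa] [hb pb].
have aH : a \is hermsymmx.
  by apply/is_hermitianmxP; rewrite expr0 scale1r -adj_tC ha.
have aN := hermitian_normalmx aH.
have /orthomx_spectralP aE := aN.
set P := spectralmx a in aE; set d := spectral_diag a in aE.
have Pu : P \is unitarymx := spectral_unitarymx a.
have Pinv : invmx P = adjmx P by rewrite invmx_unitary // adj_tC.
have PPt : P *m adjmx P = 1%:M by rewrite -Pinv mulmxV // spectral_unit.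
rewrite Pinv in aE.
have Dd : P *m a *m adjmx P = diag_mx d.
  by rewrite aE !mulmxA PPt mul1mx -mulmxA PPt mulmx1.
rewrite /phi hb aE !mulmxA mxtrace_mulC !mulmxA mul_mx_diag /mxtrace.
apply: sumr_ge0 => k _; rewrite mxE.
apply: mulr_ge0.
  by rewrite diag_entry_qf; apply: pb.
have -> : d 0 k = diag_mx d k k by rewrite mxE eqxx mulr1n.
by rewrite -Dd diag_entry_qf; apply: pa.
Qed.

End Spec.

Section Main.
Variable (R : realType) (n : nat) (Rel : rel 'I_n).
Hypothesis reflR : reflexive Rel.
Hypothesis symR : symmetric Rel.
Local Notation C := (R[i]).
Local Notation T := (Tmap Rel).

Lemma phi_delta (x : 'M[C]_n) i j : phi x (delta_mx i j) = Num.conj (x i j).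
Proof.
rewrite phiE (bigD1 i) //= (bigD1 j) //= !mxE !eqxx mulr1.
rewrite big1 ?addr0; last by move=> k kj; rewrite mxE eqxx (negbTE kj) mulr0.
rewrite big1 ?addr0 //; move=> k ki; rewrite big1 // => l _.
by rewrite mxE (negbTE ki) mulr0.
Qed.

Lemma inA_delta i j : Rel i j -> inA Rel (delta_mx i j : 'M[C]_n).
Proof.
move=> h k l nkl; rewrite mxE.
by case: (eqVneq k i) => [eki|]; case: (eqVneq l j) => [elj|] //=; subst; rewrite h in nkl.
Qed.

Lemma inA_sum (I : Type) (s : seq I) (F : I -> 'M[C]_n) :
  (forall i, inA Rel (F i)) -> inA Rel (\sum_(i <- s) F i).
Proof.
move=> h; elim: s => [|a s IH]; first by rewrite big_nil; exact: (@inA0 R n Rel).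
by rewrite big_cons; apply: inAD.
Qed.

Section Psi.
Variable psi : 'M[C]_n -> C.
Hypothesis lin : dual_lin Rel psi.

Lemma psi0 : psi 0 = 0.
Proof.
have := lin 1 (@inA0 R n Rel) (@inA0 R n Rel); rewrite scaler0 addr0 mul1r => e.
by apply: (addrI (psi 0)); rewrite addr0 -e.
Qed.
Lemma psiZ c a : inA Rel a -> psi (c *: a) = c * psi a.
Proof. by move=> ha; have := lin c ha (@inA0 R n Rel); rewrite !addr0 psi0 addr0. Qed.
Lemma psiD a b : inA Rel a -> inA Rel b -> psi (a + b) = psi a + psi b.
Proof. by move=> ha hb; have := lin 1 ha hb; rewrite scale1r mul1r. Qed.
Lemma psi_sum (I : Type) (s : seq I) (F : I -> 'M[C]_n) :
  (forall i, inA Rel (F i)) -> psi (\sum_(i <- s) F i) = \sum_(i <- s) psi (F i).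
Proof.
move=> h; elim: s => [|a s IH]; first by rewrite !big_nil psi0.
by rewrite !big_cons psiD ?IH //; apply: inA_sum.
Qed.
Lemma psi_expand a : inA Rel a ->
  psi a = \sum_i \sum_j a i j * (if Rel i j then psi (delta_mx i j) else 0).
Proof.
move=> ha; have hterm i j : inA Rel (a i j *: delta_mx i j).
  have [h|h] := boolP (Rel i j); first by apply: inAZ; apply: inA_delta.
  by rewrite ha // scale0r; apply: (@inA0 R n Rel).
rewrite {1}(matrix_sum_delta a) psi_sum; last by move=> i; apply: inA_sum.
apply: eq_bigr => i _; rewrite psi_sum //; apply: eq_bigr => j _.
have [h|h] := boolP (Rel i j); first by rewrite psiZ //; apply: inA_delta.
by rewrite ha // scale0r psi0 mul0r.
Qed.
End Psi.

Lemma phi_lin (x : 'M[C]_n) : dual_lin Rel (phi x).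
Proof. by move=> c a b _ _; rewrite phiDr phiZr. Qed.

Lemma order_back (x : 'M[C]_n) : inA Rel x ->
  dual_ge0 Rel (phi x) -> succeq0 Rel x.
Proof.
move=> hx H.
have hxH := herm_of_dual reflR symR hx H.
have [b0 [hb0 pb0] bmin] := exists_min reflR x.
pose y := T b0; pose d := y - x.
have dA : inA Rel d by apply: inAB => //; apply: inA_T.
have yH : adjmx y = y by rewrite /y adj_T // hb0.
have dH : adjmx d = d by rewrite /d adjmxB yH hxH.
have key (K : 'M[C]_n) (c : R -> 'M[C]_n) :
    (forall t, 0 < t -> t < 1 -> psd (c t) /\ T (c t) - x = d + (t%:C)%C *: K) ->
    0 <= RE (phi d K + phi K d).
  move=> hc; apply: (quad_ge0 (be := nrm K)) => t t0 t1.
  have [pc ec] := hc t t0 t1.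
  have := bmin _ pc; rewrite ec nrm_quad -/d; lra.
have dpsd : psd d.
  split => // v; change (0 <= qf d v); rewrite ge0C; apply/andP; split.
    have := qf_conj d v; rewrite dH conjE => e.
    by apply/eqP; have := f_equal (@complex.Im R) e => /= ; lra.
  have := key (T (r1 v)) (fun t => b0 + (t%:C)%C *: r1 v).
  rewrite phi_Tr // phi_T // (phi_sym d (r1 v)) phi_r1 conjCK RED REJ.
  move=> h; suff : 0 <= RE (qf d v) *+ 2 by rewrite pmulrn_lge0.
  rewrite mulr2n; apply: h => t t0 t1; split.
    by apply: psdD => //; apply: psdZ; [lra | apply: psd_r1].
  by rewrite T_D T_Z /d /y addrAC.
have a1 : 0 <= RE (phi d y + phi y d).
  apply: (key y (fun t => b0 + (t%:C)%C *: b0)) => t t0 t1; split.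
    by apply: psdD => //; apply: psdZ => //; lra.
  by rewrite T_D T_Z /d /y addrAC.
have a2 : 0 <= RE (phi d (- y) + phi (- y) d).
  apply: (key (- y) (fun t => b0 + ((- t)%:C)%C *: b0)) => t t0 t1; split.
    rewrite (_ : b0 + _ = ((1 - t)%:C)%C *: b0); first by apply: psdZ => //; lra.
    rewrite -{1}(scale1r b0) -scalerDl; congr (_ *: _).
    by apply: complex_ext => /=; rewrite ?addr0.
  rewrite T_D T_Z /d /y addrAC; congr (_ + _); rewrite scalerN -scaleNr; congr (_ *: _).
  by apply: complex_ext; rewrite /= ?oppr0.
rewrite phiNr phiNl -opprD REN in a2.
have ry : RE (phi d y) = 0.
  move: a1 a2; rewrite (phi_sym d y) RED REJ; lra.
have hd := H d dA dpsd.
have : nrm d <= 0.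
  rewrite /nrm {2}/d phiBr RED REN ry (phi_sym x d) REJ.
  by move: hd; rewrite ge0C => /andP[_]; lra.
move/nrm_eq0 => /eqP; rewrite subr_eq0 => /eqP yx.
by exists b0 => //; rewrite -yx.
Qed.

End Main.

Theorem proposition4p5 (R : realType) (n : nat) (Rel : rel 'I_n) :
  tolerance Rel ->
  [/\ (* the map x |-> phi_x|_A lands in A^* *)
      (forall x : 'M[R[i]]_n, inA Rel x -> dual_lin Rel (phi x)),
      (* it is R-linear *)
      (forall (r : R[i]) (x y : 'M[R[i]]_n), r \is Num.real ->
         inA Rel x -> inA Rel y ->
         forall a, inA Rel a -> phi (r *: x + y) a = r * phi x a + phi y a),
      (* injective on A (functionals on A compared by their values on A) *)
      (forall x y : 'M[R[i]]_n, inA Rel x -> inA Rel y ->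
         (forall a, inA Rel a -> phi x a = phi y a) -> x = y),
      (* surjective onto A^* *)
      (forall psi : 'M[R[i]]_n -> R[i], dual_lin Rel psi ->
         exists2 x, inA Rel x & forall a, inA Rel a -> phi x a = psi a)
    & (* order isomorphism *)
      (forall x : 'M[R[i]]_n, inA Rel x ->
         (succeq0 Rel x <-> dual_ge0 Rel (phi x)))].
Proof.
move=> [reflR symR]; split.
- by move=> x _; apply: phi_lin.
- by move=> r x y rreal _ _ a _; rewrite phiDl phiZl conj_Creal.
- move=> x y hx hy h; apply/matrixP => i j.
  have [hij|nij] := boolP (Rel i j); last by rewrite hx // hy.
  have := h _ (@inA_delta R n Rel i j hij); rewrite !phi_delta => e.
  by rewrite -(conjCK (x i j)) e conjCK.
- move=> psi lin.
  exists (\matrix_(i, j) (if Rel i j then Num.conj (psi (delta_mx i j)) else 0)).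
    by move=> i j /negbTE h; rewrite mxE h.
  move=> a ha; rewrite (psi_expand lin ha) (psi_expand (@phi_lin R n Rel _) ha).
  apply: eq_bigr => i _; apply: eq_bigr => j _; case: ifP => // h.
  by rewrite phi_delta mxE h conjCK.
- move=> x hx; split; last exact: order_back.
  move=> [b pb ->] a ha pa; rewrite phi_T //; exact: trace_psd.
Qed.
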